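(* Let $G_4=K_{3,3}$, drawn as a regular hexagon with vertices $u_1,\dots,u_6$ in cyclic order, whose edges are the six sides $u_iu_{i+1}$ (indices mod 6) and the three long diagonals $u_1u_4,u_2u_5,u_3u_6$. Let the dihedral group $D_6$ of order $12$ (the symmetry group of the hexagon) act on edge labellings of $G_4$ via its action on the edges. For $s\ge0$ let $\widetilde{h}(s)$ be the number of magic distinct labellings of $G_4$ with magic sum $s$ counted up to this $D_6$-action (i.e. the number of $D_6$-orbits). Then $\widetilde{h}(s)$ is divisible by $6$ for every $s$.
   Context: A magic labelling of a finite graph is an assignment of nonnegative integer labels to its edges such that for every vertex the sum of the labels of the incident edges equals the same number $s$ (the magic sum). A magic distinct labelling is a magic labelling whose labels are pairwise distinct. *)

(* Defs.v *)
From mathcomp Require Import all_boot all_order all_algebra all_fingroup.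
Set Implicit Arguments. Unset Strict Implicit. Unset Printing Implicit Defensive.

(* Vertices of the hexagon: u_1,...,u_6 are 0,...,5 : 'I_6, in cyclic order. *)
Definition V := 'I_6.

(* G_4 = K_{3,3}: u_i u_j is an edge iff i - j is odd, i.e. i - j = +-1
   (the six sides) or i - j = 3 (the three long diagonals). *)
Definition is_edge (e : {set V}) : bool :=
  [exists i : V, exists j : V, (e == [set i; j]) && odd (i + j)].

Definition E := {e : {set V} | is_edge e}.

Definition D6 : {set {perm V}} :=
  [set g : {perm V} | [exists k : V,
     [forall x : V, g x == (k + x)%R] || [forall x : V, g x == (k - x)%R]]].

(* Action of a vertex permutation on edges (for g in D6 the image of an
   edge is an edge; the default branch is never used for such g). *)
Definition edge_act (g : {perm V}) (e : E) : E := insubd e (g @: val e).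

(* Every label of a magic labelling with
   magic sum s is at most s (each edge is incident to a vertex), so such
   labellings are exactly the functions E -> 'I_(s.+1) below. *)
Definition lab (s : nat) := {ffun E -> 'I_s.+1}.

Definition magic (s : nat) (f : lab s) : bool :=
  [forall v : V, (\sum_(e : E | v \in val e) (f e : nat)) == s].

Definition distinct_labels (s : nat) (f : lab s) : bool := injectiveb f.

Definition magic_distinct (s : nat) (f : lab s) : bool :=
  magic f && distinct_labels f.

Definition orbitD6 (s : nat) (f : lab s) : {set lab s} :=
  [set [ffun e => f (edge_act g e)] | g in D6].

Definition htilde (s : nat) : nat :=
  #|[set orbitD6 f | f in [set f : lab s | magic_distinct f]]|.

(* Main.v *)
Require Import Defs.
From mathcomp Require Import all_boot all_order all_algebra all_fingroup.
Set Implicit Arguments. Unset Strict Implicit. Unset Printing Implicit Defensive.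
Import GRing.Theory.

Lemma oddVD (x y : V) : odd (x + y)%R = odd x (+) odd y.
Proof. by rewrite /= odd_mod // oddD. Qed.
Lemma oddVN (x : V) : odd (- x)%R = odd x.
Proof. rewrite /= odd_mod // oddB ?addFb //. by apply: ltnW. Qed.

Definition H : {set {perm V}} :=
  [set g : {perm V} | [exists b : bool, [forall x : V, odd (g x) == b (+) odd x]]].

Lemma inHP (g : {perm V}) :
  reflect (exists b, forall x, odd (g x) = b (+) odd x) (g \in H).
Proof.
rewrite inE; apply: (iffP existsP) => [[b /forallP Hb]|[b Hb]]; exists b.
  by move=> x; apply/eqP.
by apply/forallP => x; rewrite Hb.
Qed.

Lemma H_group_set : group_set H.
Proof.
apply/group_setP; split; first by apply/inHP; exists false => x; rewrite perm1.
move=> g h /inHP[b Hb] /inHP[c Hc]; apply/inHP; exists (c (+) b) => x.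
by rewrite permM Hc Hb addbA.
Qed.
Canonical H_group := Group H_group_set.

Lemma edge_img (g : {perm V}) (e : E) : g \in H -> is_edge (g @: val e).
Proof.
move=> /inHP[b Hb].
have /existsP[i /existsP[j /andP[/eqP -> oij]]] := valP e.
rewrite imsetU1 imset_set1; apply/existsP; exists (g i); apply/existsP; exists (g j).
rewrite eqxx /= oddD !Hb.
by move: oij; rewrite oddD; clear Hb; case: (odd i); case: (odd j); case: b.
Qed.

Lemma val_edge_act g e : g \in H -> val (edge_act g e) = g @: val e.
Proof. by move=> Hg; rewrite /edge_act insubdK //; apply: edge_img. Qed.

Lemma edge_actM g h e : g \in H -> h \in H ->
  edge_act (g * h) e = edge_act h (edge_act g e).
Proof.
move=> Hg Hh; apply: val_inj.
rewrite val_edge_act ?groupM // !val_edge_act //.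
rewrite -imset_comp; apply: eq_imset => x; by rewrite permM.
Qed.

Lemma edge_act1 e : edge_act 1 e = e.
Proof.
apply: val_inj; rewrite val_edge_act ?group1 //.
by rewrite -[RHS]imset_id; apply: eq_imset => x; rewrite perm1.
Qed.

Lemma edge_actK g e : g \in H -> edge_act g^-1 (edge_act g e) = e.
Proof. by move=> Hg; rewrite -edge_actM ?groupV // mulgV edge_act1. Qed.
Lemma edge_actKV g e : g \in H -> edge_act g (edge_act g^-1 e) = e.
Proof. by move=> Hg; rewrite -edge_actM ?groupV // mulVg edge_act1. Qed.

Definition to s (f : lab s) (g : {perm V}) : lab s :=
  if g \in H then [ffun e => f (edge_act g^-1 e)] else f.

Lemma to_is_action s : is_action H (@to s).
Proof.
split.
  move=> g f1 f2; rewrite /to; case: ifP => // Hg E12.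
  apply/ffunP => e; move/ffunP: E12 => /(_ (edge_act g e)).
  by rewrite !ffunE edge_actK.
move=> f a b Ha Hb; rewrite /to groupM // Ha Hb; apply/ffunP => e.
by rewrite !ffunE invMg edge_actM ?groupV.
Qed.
Canonical toA s := Action (to_is_action s).

Definition M s := [set f : lab s | magic_distinct f].

Lemma to_M s (f : lab s) g : g \in H -> f \in M s -> to f g \in M s.
Proof.
move=> Hg; rewrite !inE /magic_distinct /to Hg => /andP[/forallP Mf /injectiveP If].
apply/andP; split; last first.
  apply/injectiveP => e1 e2; rewrite !ffunE => /If.
  by move/(congr1 (edge_act g)); rewrite !edge_actKV.
apply/forallP => v.
rewrite (reindex_inj (h := edge_act g)); last first.
  by move=> e1 e2 /(congr1 (edge_act g^-1)); rewrite !edge_actK.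
have -> : \sum_(j : E | v \in val (edge_act g j)) ([ffun e => f (edge_act g^-1 e)] (edge_act g j) : nat)
   = \sum_(j : E | (g^-1)%g v \in val j) (f j : nat).
  apply: eq_big => [j|j _]; last by rewrite ffunE edge_actK.
  rewrite val_edge_act // -{1}(permKV g v) mem_imset //; exact: perm_inj.
exact: Mf.
Qed.

Lemma acts_M s : [acts H, on M s | toA s].
Proof.
apply/subsetP => g Hg; apply/setIP; split => //; rewrite inE.
apply/subsetP => f Mf; rewrite inE /=; exact: to_M.
Qed.

Lemma fix_vertex (g : {perm V}) (x y1 y2 : V) :
  g @: [set x; y1] = [set x; y1] -> g @: [set x; y2] = [set x; y2] ->
  y1 != y2 -> x != y1 -> g x = x.
Proof.
move=> E1 E2 n12 nx1.
have : g x \in [set x; y2] by rewrite -E2 imset_f // !inE eqxx.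
have : g x \in [set x; y1] by rewrite -E1 imset_f // !inE eqxx.
rewrite !inE => /orP[/eqP //|/eqP ->] /orP[/eqP h|/eqP h].
  by rewrite h eqxx in nx1.
by rewrite h eqxx in n12.
Qed.

Lemma free_M s (f : lab s) g : f \in M s -> g \in H -> to f g = f -> g = 1%g.
Proof.
rewrite inE /to => /andP[_ /injectiveP If] Hg; rewrite Hg => /ffunP Ef.
have Ee : forall e : E, g @: val e = val e.
  move=> e; rewrite -val_edge_act //; congr val.
  have := Ef (edge_act g e); rewrite ffunE edge_actK // => /If.
  by move=> <-.
apply/permP => x; rewrite perm1.
pose y1 : V := if odd x then Ordinal (isT : 0 < 6) else Ordinal (isT : 1 < 6).
pose y2 : V := if odd x then Ordinal (isT : 2 < 6) else Ordinal (isT : 3 < 6).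
have ed : forall y : V, odd (x + y) -> is_edge [set x; y].
  move=> y oxy; apply/existsP; exists x; apply/existsP; exists y; by rewrite eqxx.
have o1 : odd (x + y1) by rewrite /y1; case: ifP => ox; rewrite oddD ox.
have o2 : odd (x + y2) by rewrite /y2; case: ifP => ox; rewrite oddD ox.
apply: (fix_vertex (y1 := y1) (y2 := y2)).
- exact: (Ee (Sub _ (ed _ o1))).
- exact: (Ee (Sub _ (ed _ o2))).
- by rewrite /y1 /y2; case: ifP.
- by apply/eqP => exy; move: o1; rewrite -exy addnn odd_double.
Qed.

Lemma free_count (G : {group {perm V}}) s : G \subset H ->
  #|M s| = (#|orbit (toA s) G @: M s| * #|G|)%N.
Proof.
move=> sGH; have actG : [acts G, on M s | toA s].
  by apply: subset_trans (acts_M s).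
apply: card_uniform_partition (orbit_partition actG).
move=> O /imsetP[f Mf ->].
have := card_orbit_in_stab (toA s) f sGH.
have -> : ('C_G[f | toA s])%g = 1%g.
  apply/setP => g.
  rewrite !inE sub1set inE; apply/idP/idP.
    case/and3P => Gg Hg' /eqP Tg; have Hg : g \in H by rewrite inE.
    by apply/eqP; exact: free_M Mf Hg Tg.
  move/eqP => ->; apply/and3P; split; first exact: group1.
    by have := group1 H_group; rewrite inE.
  by apply/eqP/ffunP => e; rewrite /= /to group1 ffunE invg1 edge_act1.
by rewrite cards1 muln1.
Qed.

Lemma subI (k : V) : injective (fun x : V => (k - x)%R).
Proof. by move=> x y /addrI /oppr_inj. Qed.

Definition rho (p : V * bool) : {perm V} :=
  if p.2 then perm (@addrI _ p.1) else perm (@subI p.1).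

Lemma rhoE p x : rho p x = if p.2 then (p.1 + x)%R else (p.1 - x)%R.
Proof. by rewrite /rho; case: p.2; rewrite permE. Qed.

Lemma inD6P g : reflect (exists p, g = rho p) (g \in D6).
Proof.
rewrite inE; apply: (iffP existsP).
  move=> [k /orP[/forallP h|/forallP h]]; [exists (k, true)|exists (k, false)];
  by apply/permP => x; rewrite rhoE; apply/eqP: (h x).
move=> [[k b] ->]; exists k; case: b; apply/orP; [left|right];
  by apply/forallP => x; rewrite rhoE.
Qed.

Lemma D6_group_set : group_set D6.
Proof.
apply/group_setP; split.
  apply/inD6P; exists (0%R, true); apply/permP => x; by rewrite perm1 rhoE add0r.
move=> g h /inD6P[[k1 b1] ->] /inD6P[[k2 b2] ->]; apply/inD6P.
exists ((k2 + (if b2 then k1 else - k1))%R, if b2 then b1 else ~~ b1).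
apply/permP => x; rewrite permM !rhoE /=.
by case: b1; case: b2 => /=; rewrite ?opprD ?opprK ?addrA.
Qed.
Canonical D6_group := Group D6_group_set.

Lemma rho_inj : injective rho.
Proof.
move=> [k1 b1] [k2 b2] E12.
have e0 := congr1 (fun g : {perm V} => g 0%R) E12.
have e1 := congr1 (fun g : {perm V} => g 1%R) E12.
have n1 : (1 : V)%R != (-1)%R by [].
move: e0 e1; rewrite /= !rhoE /=; clear E12.
case: b1; case: b2; rewrite ?addr0 ?subr0 => ek; subst k2 => //= /addrI h.
  by move: n1; rewrite -h eqxx.
by move: n1; rewrite h eqxx.
Qed.

Lemma card_D6 : #|D6| = 12.
Proof.
have -> : D6 = [set rho p | p in [set: V * bool]].
  apply/setP => g; apply/inD6P/imsetP => [[p ->]|[p _ ->]]; last by exists p.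
  by exists p; rewrite ?inE.
by rewrite card_imset ?cardsT ?card_prod ?card_ord ?card_bool //; apply: rho_inj.
Qed.

Lemma D6_sub_H : D6 \subset H.
Proof.
apply/subsetP => g /inD6P[[k b] ->]; apply/inHP; exists (odd k) => x.
by rewrite rhoE /=; case: b; rewrite ?oddVD ?oddVN.
Qed.

Lemma orbitE s (f : lab s) : orbitD6 f = orbit (toA s) D6 f.
Proof.
apply/setP => h; apply/imsetP/imsetP => [[g Dg ->]|[g Dg ->]]; exists g^-1%g;
  rewrite ?groupV //= /to.
  rewrite groupV (subsetP D6_sub_H) //; apply/ffunP => e; by rewrite !ffunE invgK.
rewrite (subsetP D6_sub_H) //; apply/ffunP => e; by rewrite !ffunE.
Qed.

Lemma htildeE s : htilde s = #|orbit (toA s) D6 @: M s|.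
Proof.
rewrite /htilde; apply: eq_card => O.
by apply/imsetP/imsetP => [[f Mf ->]|[f Mf ->]]; exists f; rewrite ?orbitE.
Qed.

From mathcomp Require Import zify.

Definition Kc : {set {perm V}} := [set g : {perm V} | [forall x : V, odd (g x) == odd x]].

Lemma Kc_group_set : group_set Kc.
Proof.
apply/group_setP; split; first by rewrite inE; apply/forallP => x; rewrite perm1.
move=> g h; rewrite !inE => /forallP Hg /forallP Hh; apply/forallP => x.
by rewrite permM (eqP (Hh _)) (eqP (Hg _)).
Qed.
Canonical Kc_group := Group Kc_group_set.

Definition tt6 : {perm V} := rho (1%R, false).

Lemma odd_tt6 x : odd (tt6 x) = ~~ odd x.
Proof.
have -> : tt6 x = (1 - x)%R by rewrite /tt6 rhoE.
by rewrite oddVD oddVN.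
Qed.

Definition A6 : {set V} := [set x : V | ~~ odd x].

Lemma card_A6 : #|A6| = 3.
Proof.
have h1 : #|A6| <= #|~: A6|.
  rewrite -(card_imset _ (@perm_inj _ tt6)); apply: subset_leq_card.
  by apply/subsetP => y /imsetP[x Ax ->]; move: Ax; rewrite !inE odd_tt6 ?negbK.
have h2 : #|~: A6| <= #|A6|.
  rewrite -(card_imset _ (@perm_inj _ tt6)); apply: subset_leq_card.
  by apply/subsetP => y /imsetP[x Ax ->]; move: Ax; rewrite !inE odd_tt6 ?negbK.
have := cardsC A6; rewrite card_ord; lia.
Qed.

Lemma card_CA6 : #|~: A6| = 3.
Proof. by have := cardsC A6; rewrite card_ord card_A6 => /eqP; rewrite eqn_add2l => /eqP. Qed.

Lemma Sym_sub_Kc (S : {set V}) : (S = A6) \/ (S = ~: A6) -> Sym S \subset Kc.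
Proof.
move=> hS; apply/subsetP => g; rewrite !inE => pg; apply/forallP => x.
have := perm_closed x pg.
case: hS => ->; rewrite !inE ?negbK.
  by move/negb_inj ->.
by move ->.
Qed.

Lemma commute_Sym : commute (Sym A6) (Sym (~: A6)).
Proof.
apply: centC; apply/centsP => g; rewrite inE => pg h; rewrite inE => ph.
apply: perm_onC pg ph _; by rewrite disjoints_subset setCK.
Qed.

Definition X6 : {group {perm V}} := Group (introT comm_group_setP commute_Sym).

Lemma card_X6 : #|X6| = 36.
Proof.
rewrite /= TI_cardMg ?card_Sym ?card_A6 ?card_CA6 //.
apply/trivgP/subsetP => g; rewrite !inE => /andP[pA pC].
apply/eqP/permP => x; rewrite perm1.
case: (boolP (x \in A6)) => xA; last exact: (out_perm pA).
by apply: (out_perm pC); rewrite in_setC negbK.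
Qed.

Lemma dvd36_Kc : 36 %| #|Kc|.
Proof.
rewrite -card_X6; apply: (cardSg (G := Kc_group)).
by rewrite mulG_subG !Sym_sub_Kc //; [right|left].
Qed.

Lemma card_H : #|H| = (2 * #|Kc|)%N.
Proof.
have -> : H = Kc :|: [set (tt6 * g)%g | g in Kc].
  apply/setP => g; rewrite in_setU; apply/idP/idP.
    move=> /inHP[[] Hb]; last by rewrite inE; apply/orP; left; apply/forallP => x; rewrite Hb.
    apply/orP; right; apply/imsetP; exists (tt6^-1 * g)%g; last by rewrite mulKVg.
    rewrite inE; apply/forallP => x; rewrite permM Hb.
    have := odd_tt6 (tt6^-1 x)%g; rewrite permKV => ->.
    by case: (odd _).
  case/orP => [|/imsetP[h Kh ->]]; first by apply: (subsetP _ g); apply/subsetP => k;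
    rewrite !inE => /forallP Hk; apply/existsP; exists false; apply/forallP => x.
  apply/inHP; exists true => x; rewrite permM; move: Kh; rewrite inE => /forallP /(_ (tt6 x)) /eqP ->.
  by rewrite odd_tt6.
rewrite cardsU card_imset; last exact: mulgI.
have -> : Kc :&: [set (tt6 * g)%g | g in Kc] = set0.
  apply/setP => g; rewrite !inE; apply/negP => /andP[/forallP Kg /imsetP[h Kh eg]].
  move: Kh (Kg 0%R); rewrite eg inE permM => /forallP /(_ (tt6 0%R)) /eqP ->.
  by rewrite odd_tt6; case: (odd _).
by rewrite cards0 subn0 addnn -mul2n.
Qed.

Theorem mainTheorem8 : forall s : nat, 6 %| htilde s.
Proof.
move=> s.
have c1 := free_count s D6_sub_H.
have c2 := free_count s (subxx H).
rewrite card_D6 -htildeE in c1.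
have d72 : 72 %| #|M s|.
  rewrite c2 /= card_H; apply: dvdn_mull.
  by rewrite (_ : 72 = 2 * 36)%N // dvdn_pmul2l // dvd36_Kc.
rewrite c1 in d72.
by rewrite -(@dvdn_pmul2r 12) //.
Qed.
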